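(* In the line network setting of the context, let $\lambda_{\min}>0$ be such that (P) is feasible for both $\mathbf{G}_{\mathrm{HD}}$ and $\mathbf{G}_{\mathrm{FD}}$ with $t^*_{\mathrm{HD}}>0$. Let $\eta\in(0,1)$, $\delta^*_{\mathrm{HD}}=-\log(1-\eta)/t^*_{\mathrm{HD}}$, $\delta^*_{\mathrm{FD}}=-\log(1-\eta)/t^*_{\mathrm{FD}}$, and $\ell=\delta^*_{\mathrm{HD}}/\delta^*_{\mathrm{FD}}$. Then with $$\Lambda_1=\frac{R_a}{4(K+1)\left(\frac{R_a}{R_b}\right)^2+(2K+3)w\frac{R_a}{R_b}+w},\qquad \Lambda_2=\frac{R_a}{(K+1)\left(\frac{R_a}{R_b}\right)^2+(K+1)w\frac{R_a}{R_b}+w},$$ $$\ell=\begin{cases}\dfrac{1-w\lambda_{\min}\left(\frac1{R_b}+\frac1{R_a}\right)}{1-w\lambda_{\min}\left(\frac3{R_b}+\frac1{R_a}\right)}\cdot\dfrac{\frac{2(K+1)}{R_b}+\frac{Kw}{R_a}}{\frac{K+1}{R_b}+\frac{Kw}{R_a}}, & \lambda_{\min}\le\Lambda_1,\\[3ex] \dfrac{1-w\lambda_{\min}\left(\frac1{R_b}+\frac1{R_a}\right)}{1-w\lambda_{\min}\left(\frac{2K-1}{R_b}+\frac1{R_a}\right)}\cdot\dfrac{\frac{2(K+1)}{R_b}+\frac{2w}{R_a}}{\frac{K+1}{R_b}+\frac{Kw}{R_a}}, & \Lambda_1<\lambda_{\min}\le\Lambda_2,\\[3ex] 2\,\dfrac{1-w\lambda_{\min}\left(\frac{K}{R_b}+\frac1{R_a}\right)}{1-w\lambda_{\min}\left(\frac{2K-1}{R_b}+\frac1{R_a}\right)},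 & \lambda_{\min}>\Lambda_2.\end{cases}$$
   Context: General setting: a rooted tree with root the donor (vertex $0$), other internal vertices IAB nodes $1,\dots,K$, leaves $M$ user equipments (UEs); vertices $0,\dots,K$ are base stations (BSs). Each non-root vertex $v$ has a unique parent and the edge from its parent to $v$ is indexed by $v$; $\mathcal{E}$ is the edge set. For each UE $m$, $\mathsf{R}(m)$ is the set of edges on the path from $0$ to $m$ and $h_m=|\mathsf{R}(m)|$. $\mathbf{F}\in\{0,1\}^{|\mathcal{E}|\times M}$ has $F_{v,m}=1$ iff $v\in\mathsf{R}(m)$. $\mathbf{C}=\mathrm{diag}(c_v)$ with $c_v>0$ the capacity of edge $v$. Half-duplex scheduling matrix $\mathbf{G}_{\mathrm{HD}}\in\{0,1\}^{(K+1)\times|\mathcal{E}|}$: $[\mathbf{G}_{\mathrm{HD}}]_{k,v}=1$ iff BS $k$ is the parent or the child of edge $v$; full-duplex $\mathbf{G}_{\mathrm{FD}}$: $[\mathbf{G}_{\mathrm{FD}}]_{k,v}=1$ iff BS $k$ is the parent of edge $v$. Problem (P) for a given $\mathbf{G}$ and $\lambda_{\min}>0$: maximize $t$ over $(t,\boldsymbol{\lambda},\boldsymbol{\mu})\in\mathbb{R}\times\mathbb{R}^M\times\mathbb{R}^{|\mathcal{E}|}$ subject to $\boldsymbol{\lambda}\ge\lambda_{\min}\mathbf{1}$, $\mathbf{0}\le\boldsymbol{\mu}\le\mathbf{1}$, $t\ge0$, $\mathbf{G}\boldsymbol{\mu}\le\mathbf{1}$, and $c_v\mu_v-(\mathbf{F}\boldsymbol{\lambda})_v\ge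 t\,h_m$ for every UE $m$ and every $v\in\mathsf{R}(m)$; $t^*_{\mathrm{HD}}$, $t^*_{\mathrm{FD}}$ denote its optimal values for $\mathbf{G}_{\mathrm{HD}}$, $\mathbf{G}_{\mathrm{FD}}$. Line network: $K\ge2$; IAB node $k$ is the child of BS $k-1$ for $k=1,\dots,K$; each BS $k\in\{0,\dots,K\}$ has, in addition, exactly $w\ge1$ UE children and no other children. Each backhaul edge (into an IAB node) has capacity $R_b$ and each access edge (into a UE) has capacity $R_a$, where $0<R_a<R_b$. Additionally assume $wR_b\le (K+1)R_a$. The same $\mathbf{C}$ is used for both the HD and FD cases. *)

(* Defs.v *)
From HB Require Import structures.
From mathcomp Require Import all_boot all_order all_algebra.
From mathcomp Require Import all_classical all_reals.
From mathcomp Require Import exp.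
Set Implicit Arguments. Unset Strict Implicit. Unset Printing Implicit Defensive.
Import Order.TTheory GRing.Theory Num.Theory.
Local Open Scope ring_scope.

Section Tree.
Variables (V : finType) (root : V) (par : V -> V).

Definition anc (u v : V) : bool := [exists n : 'I_#|V|.+1, iter n par v == u].

(* Edges are indexed by the non-root vertices (edge v = from par v to v).
   R(m) = set of edges on the path from the root to m. *)
Definition route (m : V) : {set V} := [set v | (v != root) && anc v m].
Definition hops (m : V) : nat := #|route m|.
Definition Fmat (v m : V) : bool := v \in route m.
Definition G_HD (k v : V) : bool := (v != root) && ((par v == k) || (v == k)).
Definition G_FD (k v : V) : bool := (v != root) && (par v == k).

Variables (R : realType) (isBS isUE : pred V) (cap : V -> R)
          (G : V -> V -> bool) (lmin : R).

(* feasibility of (t, lambda, mu) for problem (P); lambda is read on UEs,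
   mu on edges (non-root vertices). *)
Definition feasibleP (t : R) (lam mu : V -> R) : Prop :=
  [/\ (forall m, isUE m -> lmin <= lam m),
      (forall v, v != root -> 0 <= mu v <= 1),
      0 <= t,
      (forall k, isBS k -> \sum_(v | v != root) (G k v)%:R * mu v <= 1) &
      (forall m v, isUE m -> v \in route m ->
          t * (hops m)%:R <=
          cap v * mu v - \sum_(m' | isUE m') (Fmat v m')%:R * lam m')].

Definition is_optP (t : R) : Prop :=
  (exists lam mu, feasibleP t lam mu) /\
  (forall t' lam mu, feasibleP t' lam mu -> t' <= t).
End Tree.

(* Vertices: inl k = BS k (k = 0..K; 0 = donor), inr (k, j) = j-th UE child of BS k. *)
Definition lineV (K w : nat) : finType := ('I_K.+1 + ('I_K.+1 * 'I_w))%type.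

Definition line_root (K w : nat) : lineV K w := inl ord0.

Definition line_par (K w : nat) (v : lineV K w) : lineV K w :=
  match v with
  | inl k => inl (inord k.-1)
  | inr kj => inl kj.1
  end.

Definition line_isBS (K w : nat) : pred (lineV K w) :=
  fun v => if v is inl _ then true else false.
Definition line_isUE (K w : nat) : pred (lineV K w) :=
  fun v => if v is inr _ then true else false.

(* backhaul edges (into IAB nodes) have capacity Rb, access edges capacity Ra *)
Definition line_cap (R : realType) (K w : nat) (Ra Rb : R) (v : lineV K w) : R :=
  if v is inl _ then Rb else Ra.

Definition line_opt (R : realType) (K w : nat) (Ra Rb lmin : R)
    (G : lineV K w -> lineV K w -> bool) (t : R) : Prop :=
  is_optP (line_root K w) (line_par (w:=w)) (line_isBS (w:=w)) (line_isUE (w:=w))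
          (line_cap Ra Rb) G lmin t.

Definition line_GHD (K w : nat) := G_HD (line_root K w) (line_par (w:=w)).
Definition line_GFD (K w : nat) := G_FD (line_root K w) (line_par (w:=w)).

(* Main.v *)
Require Import Defs.
From HB Require Import structures.
From mathcomp Require Import all_boot all_order all_algebra.
From mathcomp Require Import all_classical all_reals.
From mathcomp Require Import exp.
From mathcomp Require Import zify ring lra.
Import Order.TTheory GRing.Theory Num.Theory.
Local Open Scope ring_scope.
Lemma iter_par_inr (K w : nat) (k : 'I_K.+1) (j : 'I_w) (n : nat) :
  iter n.+1 (@line_par K w) (inr (k, j)) = inl (inord (k - n)).
Proof.
elim: n => [|n IH]; first by rewrite /= subn0 inord_val.
rewrite iterS IH /= inordK; last by rewrite ltnS (leq_trans (leq_subr _ _)) // -ltnS.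
by rewrite subnS.
Qed.
Lemma iter_par_inl (K w : nat) (i : 'I_K.+1) (n : nat) :
  exists i', iter n (@line_par K w) (inl i) = inl i'.
Proof. elim: n => [|n [i' IH]]; first by exists i. by rewrite iterS IH; eexists. Qed.

Lemma route_inl (K w : nat) (i k : 'I_K.+1) (j : 'I_w) :
  (inl i \in route (line_root K w) (@line_par K w) (inr (k, j))) = (0 < i <= k)%N.
Proof.
rewrite /route inE /line_root.
have -> : (inl i != inl ord0 :> lineV K w) = (0 < i)%N.
  by apply/idP/idP => [/eqP H|H]; [rewrite lt0n; apply/eqP => E; apply: H; congr inl; apply/val_inj|
     apply/eqP => -[E]; move: H; rewrite E].
case: (posnP i) => [i0|ip]; first by rewrite i0.
rewrite /= /anc.
apply/existsP/idP => [[[[|n] nlt]]|ik].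
- by [].
- rewrite iter_par_inr => /eqP [<-]; rewrite inordK; first exact: leq_subr.
  by rewrite ltnS (leq_trans (leq_subr _ _)) // -ltnS.
- have hn : ((k - i).+1 < #|lineV K w|.+1)%N.
    rewrite ltnS /lineV card_sum card_ord (leq_trans _ (leq_addr _ _)) //.
    by rewrite ltnS (leq_trans (leq_subr _ _)) // -ltnS.
  exists (Ordinal hn); have := @iter_par_inr _ _ k j (k-i)%N => /= ->; rewrite subKn //.
  by apply/eqP; congr inl; apply/val_inj; rewrite /= inordK.
Qed.

Lemma route_inr (K w : nat) (x y : 'I_K.+1 * 'I_w) :
  (inr x \in route (line_root K w) (@line_par K w) (inr y)) = (x == y).
Proof.
rewrite /route inE /= /anc; case: y => k j.
apply/existsP/eqP => [[[[|n] nlt]]|<-].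
- by move/eqP => [].
- by rewrite iter_par_inr.
- by exists ord0.
Qed.
Lemma sum_le_ord (n i : nat) : (\sum_(a < n) (i <= a : nat))%N = (n - i)%N.
Proof.
elim: n => [|n IH]; first by rewrite big_ord0.
rewrite big_ord_recr /= IH; case: (leqP i n) => H /=; lia.
Qed.

Lemma sum_pos_le_ord (n k : nat) : (\sum_(a < n) (0 < a <= k : nat))%N = minn n.-1 k.
Proof.
elim: n => [|n IH]; first by rewrite big_ord0 min0n.
rewrite big_ord_recr /= IH; case: n IH => [|n] IH /=; first by rewrite min0n.
case: (leqP n.+1 k) => H /=; lia.
Qed.

Lemma hops_inr (K w : nat) (k : 'I_K.+1) (j : 'I_w) :
  hops (line_root K w) (@line_par K w) (inr (k, j)) = k.+1.
Proof.
rewrite /hops -sum1_card big_mkcond /= big_sumType /=.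
under eq_bigr => i _ do rewrite route_inl.
under [X in (_ + X)%N]eq_bigr => x _ do rewrite route_inr.
rewrite sum_pos_le_ord -big_mkcond /= big_pred1_eq.
have := ltn_ord k; lia.
Qed.

Definition cnt (K w : nat) (v : lineV K w) : nat :=
  \sum_(m' | line_isUE m') (Fmat (line_root K w) (@line_par K w) v m' : nat).
Arguments cnt {K w}.

Lemma cnt_inl (K w : nat) (i : 'I_K.+1) : (0 < i)%N -> cnt (inl i : lineV K w) = (w * (K.+1 - i))%N.
Proof.
move=> ip; rewrite /cnt big_sumType /= big_pred0 // add0n.
rewrite (eq_bigr (fun x : 'I_K.+1 * 'I_w => (i <= x.1 : nat))); last first.
  by move=> [a b] _; rewrite /Fmat route_inl ip.
rewrite -(pair_bigA _ (fun (a : 'I_K.+1) (b : 'I_w) => (i <= a : nat))) /=.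
under eq_bigr => a _ do rewrite sum_nat_const card_ord.
rewrite -big_distrr /= sum_le_ord; lia.
Qed.

Lemma cnt_inr (K w : nat) (x : 'I_K.+1 * 'I_w) : cnt (inr x : lineV K w) = 1%N.
Proof.
rewrite /cnt big_sumType /= big_pred0 // add0n.
under eq_bigr => y _ do rewrite /Fmat route_inr eq_sym.
by rewrite -big_mkcond /= big_pred1_eq.
Qed.

Lemma load_ge (R : realType) (K w : nat) (lam : lineV K w -> R) (c : R) (v : lineV K w) :
  (forall m, line_isUE m -> c <= lam m) ->
  c * (cnt v)%:R <= \sum_(m' | line_isUE m') (Fmat (line_root K w) (@line_par K w) v m')%:R * lam m'.
Proof.
move=> H; rewrite /cnt natr_sum mulr_sumr; apply: ler_sum => m Hm.
by rewrite mulrC; apply: ler_wpM2l => //; apply: H.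
Qed.

Lemma load_const (R : realType) (K w : nat) (c : R) (v : lineV K w) :
  \sum_(m' | line_isUE m') (Fmat (line_root K w) (@line_par K w) v m')%:R * c = c * (cnt v)%:R.
Proof. by rewrite /cnt natr_sum mulr_sumr; apply: eq_bigr => m _; rewrite mulrC. Qed.

Lemma sum_delta (R : realType) (n a : nat) (F : 'I_n.+1 -> R) :
  \sum_(i < n.+1) (if (i : nat) == a then F i else 0) = if (a < n.+1)%N then F (inord a) else 0.
Proof.
case: ifP => ha.
  rewrite (bigD1 (inord a)) //= inordK // eqxx big1 ?addr0 // => i /negbTE hi.
  case: eqP => // E; move: hi; suff -> : i = inord a by rewrite eqxx.
  by apply: val_inj; rewrite /= inordK // -E.
by rewrite big1 // => i _; case: eqP => // E; move: ha; rewrite -E ltn_ord.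
Qed.

Lemma inl_eq (K w : nat) (a b : 'I_K.+1) : (inl a == inl b :> lineV K w) = (a == b :> nat).
Proof. by apply/eqP/eqP => [[->]|E] //; congr inl; apply: val_inj. Qed.

Lemma inr_inl_eq (K w : nat) (a : 'I_K.+1) x : (inr x == inl a :> lineV K w) = false.
Proof. by []. Qed.

Lemma root_neq (K w : nat) (i : 'I_K.+1) : (inl i != line_root K w) = (0 < i)%N.
Proof. by rewrite /line_root inl_eq /= lt0n. Qed.

Lemma par_inl (K w : nat) (i : 'I_K.+1) : @line_par K w (inl i) = inl (inord i.-1).
Proof. by []. Qed.

Lemma inord_pred_eq (K : nat) (i k : 'I_K.+1) : ((inord i.-1 : 'I_K.+1) == k :> nat) = (i.-1 == k).
Proof. rewrite inordK //; have := ltn_ord i; lia. Qed.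

Lemma sum_inr_fst (R : realType) (K w : nat) (k : 'I_K.+1) (f : 'I_K.+1 * 'I_w -> R) :
  \sum_(x : 'I_K.+1 * 'I_w) (if x.1 == k then f x else 0) = \sum_(b < w) f (k, b).
Proof.
rewrite (eq_bigr (fun x => (fun (a : 'I_K.+1) (b : 'I_w) => if a == k then f (a, b) else 0) x.1 x.2)); last by case.
rewrite -(pair_bigA _ (fun (a : 'I_K.+1) (b : 'I_w) => if a == k then f (a, b) else 0)) /=.
rewrite (bigD1 k) //= [X in _ + X]big1 ?addr0; first by apply: eq_bigr => b _; rewrite eqxx.
by move=> a /negbTE ha; rewrite big1 // => b _; rewrite ha.
Qed.

Lemma bsHD (R : realType) (K w : nat) (k : 'I_K.+1) (mu : lineV K w -> R) :
  \sum_(v | v != line_root K w) ((@line_GHD K w (inl k) v)%:R * mu v) =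
  (if (k < K)%N then mu (inl (inord k.+1)) else 0) + (if (0 < k)%N then mu (inl k) else 0)
  + \sum_(b < w) mu (inr (k, b)).
Proof.
rewrite big_mkcond /= big_sumType /=; congr (_ + _).
  rewrite (eq_bigr (fun i : 'I_K.+1 => (if (i : nat) == k.+1 then mu (inl i) else 0) +
            (if (i : nat) == k then (if (0 < k)%N then mu (inl i) else 0) else 0))); last first.
    move=> i _; rewrite /line_GHD /G_HD root_neq par_inl !inl_eq inord_pred_eq.
    have := ltn_ord i; have := ltn_ord k.
    case h1: (0 < i)%N; case h2: (i.-1 == k); case h3: (nat_of_ord i == k);
      case h4: (nat_of_ord i == k.+1); case h5: (0 < k)%N => /=; try lia;
      by rewrite ?mul1r ?mul0r ?add0r ?addr0.
  rewrite big_split /= !sum_delta; congr (_ + _).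
  by rewrite ltn_ord inord_val.
rewrite -(@sum_inr_fst _ _ _ k (fun x => mu (inr x))).
apply: eq_bigr => -[a b] _; rewrite /line_GHD /G_HD /=.
case: (a =P k) => [->|ne]; first by rewrite eqxx /= mul1r.
have /negbTE -> : inl a != inl k :> lineV K w by apply/eqP => -[].
by rewrite /= mul0r.
Qed.

Lemma bsFD (R : realType) (K w : nat) (k : 'I_K.+1) (mu : lineV K w -> R) :
  \sum_(v | v != line_root K w) ((@line_GFD K w (inl k) v)%:R * mu v) =
  (if (k < K)%N then mu (inl (inord k.+1)) else 0) + \sum_(b < w) mu (inr (k, b)).
Proof.
rewrite big_mkcond /= big_sumType /=; congr (_ + _).
  rewrite (eq_bigr (fun i : 'I_K.+1 => (if (i : nat) == k.+1 then mu (inl i) else 0))); last first.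
    move=> i _; rewrite /line_GFD /G_FD root_neq par_inl !inl_eq inord_pred_eq.
    have := ltn_ord i; have := ltn_ord k.
    case h1: (0 < i)%N; case h2: (i.-1 == k);
      case h4: (nat_of_ord i == k.+1) => /=; try lia;
      by rewrite ?mul1r ?mul0r ?add0r ?addr0.
  by rewrite sum_delta ltnS.
rewrite -(@sum_inr_fst _ _ _ k (fun x => mu (inr x))).
apply: eq_bigr => -[a b] _; rewrite /line_GFD /G_FD /=.
case: (a =P k) => [->|ne]; first by rewrite eqxx /= mul1r.
have /negbTE -> : inl a != inl k :> lineV K w by apply/eqP => -[].
by rewrite /= mul0r.
Qed.
Lemma psi_mid (R : realType) (k c W l t p q : R) :
  0 <= t -> 0 <= W -> 0 <= l -> 0 <= p -> 0 <= q -> 1 <= c -> c <= k - 1 ->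
  (2 * (k + 1) * q + 2 * W * p) * t <= 1 - W * l * ((2 * k - 1) * q + p) ->
  (2 * (k + 1) * q + k * W * p) * t <= 1 - W * l * (3 * q + p) ->
  q * ((k + 1) * t + l * (W * (k - c))) + q * ((k + 1) * t + l * (W * (k + 1 - c)))
  + W * (p * ((c + 1) * t + l)) <= 1.
Proof.
move=> t0 W0 l0 p0 q0 c1 ck h1 hL.
set s := W * p * t - 2 * W * l * q.
have [s0|s0] := lerP s 0.
  have : (c - 1) * s <= 0 by rewrite mulr_ge0_le0 // subr_ge0.
  rewrite /s; lra.
have : (c - 1) * s <= (k - 2) * s by apply: ler_wpM2r; [exact: ltW | lra].
rewrite /s; lra.
Qed.

Lemma phi_mid (R : realType) (k c W l t p q : R) :
  0 <= t -> 0 <= W -> 0 <= l -> 0 <= p -> 0 <= q -> 0 <= c -> c <= k - 1 ->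
  ((k + 1) * q + W * p) * t <= 1 - W * l * (k * q + p) ->
  ((k + 1) * q + k * W * p) * t <= 1 - W * l * (q + p) ->
  q * ((k + 1) * t + l * (W * (k - c))) + W * (p * ((c + 1) * t + l)) <= 1.
Proof.
move=> t0 W0 l0 p0 q0 c1 ck h1 hL.
set s := W * p * t - W * l * q.
have [s0|s0] := lerP s 0.
  have : c * s <= 0 by rewrite mulr_ge0_le0.
  rewrite /s; lra.
have : c * s <= (k - 1) * s by apply: ler_wpM2r; [exact: ltW | lra].
rewrite /s; lra.
Qed.

Lemma psi_K (R : realType) (k W l t p q : R) :
  0 <= t -> 0 <= W -> 0 <= l -> 0 <= p -> 0 <= q -> W * p <= (k + 1) * q ->
  (2 * (k + 1) * q + k * W * p) * t <= 1 - W * l * (3 * q + p) ->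
  q * ((k + 1) * t + l * W) + W * (p * ((k + 1) * t + l)) <= 1.
Proof.
move=> t0 W0 l0 p0 q0 hW hL.
have : 0 <= t * ((k + 1) * q - W * p) by rewrite mulr_ge0 // subr_ge0.
have : 0 <= W * l * q by rewrite !mulr_ge0.
lra.
Qed.

Lemma phi_K (R : realType) (k W l t p q : R) :
  0 <= t -> 0 <= W -> 0 <= l -> 0 <= p -> 0 <= q -> W * p <= (k + 1) * q ->
  ((k + 1) * q + k * W * p) * t <= 1 - W * l * (q + p) ->
  W * (p * ((k + 1) * t + l)) <= 1.
Proof.
move=> t0 W0 l0 p0 q0 hW hL.
have : 0 <= t * ((k + 1) * q - W * p) by rewrite mulr_ge0 // subr_ge0.
have : 0 <= W * l * q by rewrite !mulr_ge0.
lra.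
Qed.

Lemma psi_0 (R : realType) (k W l t p q : R) :
  0 <= t -> 0 <= W -> 0 <= l -> 0 <= p -> 0 <= q -> 1 <= k ->
  (2 * (k + 1) * q + 2 * W * p) * t <= 1 - W * l * ((2 * k - 1) * q + p) ->
  q * ((k + 1) * t + l * (W * k)) + W * (p * (t + l)) <= 1.
Proof.
move=> t0 W0 l0 p0 q0 k1 h1.
have : 0 <= (k + 1) * q * t by rewrite !mulr_ge0 //; lra.
have : 0 <= W * p * t by rewrite !mulr_ge0.
have : 0 <= W * l * q * (k - 1) by rewrite !mulr_ge0 //; lra.
lra.
Qed.
Arguments psi_mid {R k c W l t p q}.
Arguments phi_mid {R k c W l t p q}.
Arguments psi_K {R k W l t p q}.
Arguments phi_K {R k W l t p q}.
Arguments psi_0 {R k W l t p q}.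
Lemma mu_inl_lb (R : realType) (K w : nat) (Ra Rb lmin t : R) G lam mu (i : 'I_K.+1) :
  feasibleP (line_root K w) (@line_par K w) (@line_isBS K w) (@line_isUE K w)
     (line_cap Ra Rb) G lmin t lam mu ->
  (0 < w)%N -> (0 < i)%N ->
  (K.+1)%:R * t + lmin * (w * (K.+1 - i))%:R <= Rb * mu (inl i).
Proof.
case=> Hlam Hmu Ht HBS Hr w0 ip.
have := Hr (inr (ord_max, Ordinal w0)) (inl i) isT.
rewrite route_inl ip /= -ltnS ltn_ord => /(_ isT).
rewrite hops_inr /= -(@cnt_inl K w i ip).
have := @load_ge R K w lam lmin (inl i) Hlam; lra.
Qed.

Lemma mu_inr_lb (R : realType) (K w : nat) (Ra Rb lmin t : R) G lam mu (k : 'I_K.+1) (j : 'I_w) :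
  feasibleP (line_root K w) (@line_par K w) (@line_isBS K w) (@line_isUE K w)
     (line_cap Ra Rb) G lmin t lam mu ->
  (k.+1)%:R * t + lmin <= Ra * mu (inr (k, j)).
Proof.
case=> Hlam Hmu Ht HBS Hr.
have := Hr (inr (k, j)) (inr (k, j)) isT.
rewrite route_inr eqxx => /(_ isT).
rewrite hops_inr /=.
have := @load_ge R K w lam lmin (inr (k, j)) Hlam; rewrite cnt_inr; lra.
Qed.

Arguments mu_inl_lb {R K w Ra Rb lmin t G lam mu i}.
Arguments mu_inr_lb {R K w Ra Rb lmin t G lam mu}.

Lemma div_lb (R : realType) (c X m : R) : 0 < c -> X <= c * m -> c^-1 * X <= m.
Proof. move=> c0 h; rewrite -(mulKf (lt0r_neq0 c0) m); apply: ler_wpM2l => //; by rewrite invr_ge0 ltW. Qed.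

Lemma sum_const_w (R : realType) (w : nat) (c : R) : \sum_(b < w) c = w%:R * c.
Proof. by rewrite sumr_const card_ord mulr_natl. Qed.

Lemma mu_inl_lb' (R : realType) (K w : nat) (Ra Rb lmin t : R) G lam mu (i : 'I_K.+1) :
  feasibleP (line_root K w) (@line_par K w) (@line_isBS K w) (@line_isUE K w)
     (line_cap Ra Rb) G lmin t lam mu ->
  0 < Rb -> (0 < w)%N -> (0 < i)%N ->
  Rb^-1 * ((K%:R + 1) * t + lmin * (w%:R * (K%:R + 1 - (i : nat)%:R))) <= mu (inl i).
Proof.
move=> H Rb0 w0 ip; apply: div_lb => //.
have hi : (i <= K.+1)%N by rewrite ltnW.
have := mu_inl_lb H w0 ip; rewrite natrM natrB // -natr1; lra.
Qed.

Lemma sum_inr_lb (R : realType) (K w : nat) (Ra Rb lmin t : R) G lam mu (k : 'I_K.+1) :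
  feasibleP (line_root K w) (@line_par K w) (@line_isBS K w) (@line_isUE K w)
     (line_cap Ra Rb) G lmin t lam mu ->
  0 < Ra ->
  w%:R * (Ra^-1 * (((k : nat)%:R + 1) * t + lmin)) <= \sum_(b < w) mu (inr (k, b)).
Proof.
move=> H Ra0; rewrite -sum_const_w; apply: ler_sum => b _; apply: div_lb => //.
by have := mu_inr_lb k b H; rewrite -natr1.
Qed.
Arguments mu_inl_lb' {R K w Ra Rb lmin t G lam mu i}.
Arguments sum_inr_lb {R K w Ra Rb lmin t G lam mu}.

Lemma inordE (K n : nat) : (n <= K)%N -> ((inord n : 'I_K.+1) : nat) = n.
Proof. by move=> h; rewrite inordK. Qed.


Lemma HD_ub1 (R : realType) (K w : nat) (Ra Rb lmin t : R) lam mu :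
  feasibleP (line_root K w) (@line_par K w) (@line_isBS K w) (@line_isUE K w)
     (line_cap Ra Rb) (@line_GHD K w) lmin t lam mu ->
  (2 <= K)%N -> (0 < w)%N -> 0 < Ra -> 0 < Rb ->
  (2 * (K%:R + 1) * Rb^-1 + 2 * w%:R * Ra^-1) * t <=
    1 - w%:R * lmin * ((2 * K%:R - 1) * Rb^-1 + Ra^-1).
Proof.
move=> H K2 w0 Ra0 Rb0; have [_ _ _ HBS _] := H.
have := HBS (inl (inord 1)) isT; rewrite bsHD.
have e1 := @inordE K 1 (ltnW K2); have e2 := @inordE K 2 K2.
have h1 := mu_inl_lb' H Rb0 w0 (i := inord 1) ltac:(by rewrite e1).
have h2 := mu_inl_lb' H Rb0 w0 (i := inord 2) ltac:(by rewrite e2).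
have hs := sum_inr_lb (inord 1) H Ra0.
rewrite e1 mulr1n in h1 hs; rewrite e2 in h2.
rewrite e1 /= K2.
lra.
Qed.

Lemma predr (R : realType) (K : nat) : (0 < K)%N -> (K.-1)%:R = K%:R - 1 :> R.
Proof. by move=> h; rewrite -{2}(prednK h) -natr1 addrK. Qed.

Lemma HD_ubL (R : realType) (K w : nat) (Ra Rb lmin t : R) lam mu :
  feasibleP (line_root K w) (@line_par K w) (@line_isBS K w) (@line_isUE K w)
     (line_cap Ra Rb) (@line_GHD K w) lmin t lam mu ->
  (2 <= K)%N -> (0 < w)%N -> 0 < Ra -> 0 < Rb ->
  (2 * (K%:R + 1) * Rb^-1 + K%:R * w%:R * Ra^-1) * t <=
    1 - w%:R * lmin * (3 * Rb^-1 + Ra^-1).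
Proof.
move=> H K2 w0 Ra0 Rb0; have [_ _ _ HBS _] := H.
have := HBS (inl (inord K.-1)) isT; rewrite bsHD.
have e1 := @inordE K K.-1 (leq_pred K); have e2 := @inordE K K (leqnn K).
have K0 : (0 < K)%N by lia.
have h1 := mu_inl_lb' H Rb0 w0 (i := inord K.-1) ltac:(rewrite e1; lia).
have h2 := mu_inl_lb' H Rb0 w0 (i := inord K) ltac:(rewrite e2; lia).
have hs := sum_inr_lb (inord K.-1) H Ra0.
rewrite e1 predr // in h1 hs; rewrite e2 in h2.
rewrite e1 /= prednK // ifT; last by lia.
rewrite ifT; last by lia.
lra.
Qed.

Lemma FD_ub0 (R : realType) (K w : nat) (Ra Rb lmin t : R) lam mu :
  feasibleP (line_root K w) (@line_par K w) (@line_isBS K w) (@line_isUE K w)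
     (line_cap Ra Rb) (@line_GFD K w) lmin t lam mu ->
  (2 <= K)%N -> (0 < w)%N -> 0 < Ra -> 0 < Rb ->
  ((K%:R + 1) * Rb^-1 + w%:R * Ra^-1) * t <=
    1 - w%:R * lmin * (K%:R * Rb^-1 + Ra^-1).
Proof.
move=> H K2 w0 Ra0 Rb0; have [_ _ _ HBS _] := H.
have := HBS (inl ord0) isT; rewrite bsFD.
have e2 := @inordE K 1 (ltnW K2).
have h2 := mu_inl_lb' H Rb0 w0 (i := inord 1) ltac:(rewrite e2; lia).
have hs := sum_inr_lb ord0 H Ra0.
rewrite e2 mulr1n in h2; rewrite /= in hs.
rewrite /= ifT; last by lia.
lra.
Qed.

Lemma FD_ubL (R : realType) (K w : nat) (Ra Rb lmin t : R) lam mu :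
  feasibleP (line_root K w) (@line_par K w) (@line_isBS K w) (@line_isUE K w)
     (line_cap Ra Rb) (@line_GFD K w) lmin t lam mu ->
  (2 <= K)%N -> (0 < w)%N -> 0 < Ra -> 0 < Rb ->
  ((K%:R + 1) * Rb^-1 + K%:R * w%:R * Ra^-1) * t <=
    1 - w%:R * lmin * (Rb^-1 + Ra^-1).
Proof.
move=> H K2 w0 Ra0 Rb0; have [_ _ _ HBS _] := H.
have := HBS (inl (inord K.-1)) isT; rewrite bsFD.
have e1 := @inordE K K.-1 (leq_pred K); have e2 := @inordE K K (leqnn K).
have K0 : (0 < K)%N by lia.
have h2 := mu_inl_lb' H Rb0 w0 (i := inord K) ltac:(rewrite e2; lia).
have hs := sum_inr_lb (inord K.-1) H Ra0.
rewrite e1 predr // in hs; rewrite e2 in h2.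
rewrite e1 /= prednK // ifT; last by lia.
lra.
Qed.

Definition hgt (K w : nat) (v : lineV K w) : nat :=
  match v with inl _ => K.+1 | inr x => (x.1).+1 end.
Arguments hgt {K w}.

Definition mu0 (R : realType) (K w : nat) (Ra Rb lmin t : R) (v : lineV K w) : R :=
  (line_cap Ra Rb v)^-1 * ((hgt v)%:R * t + lmin * (cnt v)%:R).
Arguments mu0 {R K w}.

Lemma mu0_inl (R : realType) (K w : nat) (Ra Rb lmin t : R) (i : 'I_K.+1) : (0 < i)%N ->
  mu0 Ra Rb lmin t (inl i : lineV K w) =
  Rb^-1 * ((K%:R + 1) * t + lmin * (w%:R * (K%:R + 1 - (i : nat)%:R))).
Proof.
move=> ip; rewrite /mu0 /= cnt_inl // natrM natrB ?natr1 //; exact: ltnW.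
Qed.

Lemma mu0_inr_sum (R : realType) (K w : nat) (Ra Rb lmin t : R) (k : 'I_K.+1) :
  \sum_(b < w) mu0 Ra Rb lmin t (inr (k, b) : lineV K w) =
  w%:R * (Ra^-1 * (((k : nat)%:R + 1) * t + lmin)).
Proof. by rewrite -sum_const_w; apply: eq_bigr => b _; rewrite /mu0 /= cnt_inr natr1 mulr1. Qed.

Lemma feas_of (R : realType) (K w : nat) (Ra Rb lmin t : R) (G : lineV K w -> lineV K w -> bool) :
  0 < Ra -> 0 < Rb -> 0 <= t -> 0 <= lmin ->
  (forall k : 'I_K.+1, \sum_(v | v != line_root K w) (G (inl k) v)%:R * mu0 Ra Rb lmin t v <= 1) ->
  (forall v : lineV K w, v != line_root K w -> mu0 Ra Rb lmin t v <= 1) ->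
  feasibleP (line_root K w) (@line_par K w) (@line_isBS K w) (@line_isUE K w)
     (line_cap Ra Rb) G lmin t (fun _ => lmin) (mu0 Ra Rb lmin t).
Proof.
move=> Ra0 Rb0 t0 l0 HBS Hmu; split => //.
- move=> v hv; rewrite Hmu // andbT /mu0; apply: mulr_ge0.
    by case: v hv => ? _ /=; rewrite invr_ge0 ltW.
  by apply: addr_ge0; apply: mulr_ge0.
- by case.
- case=> // -[k j] v _; rewrite load_const hops_inr.
  case: v => [i|x].
    rewrite route_inl => /andP [ip ik].
    rewrite /mu0 /= mulVKf ?lt0r_neq0 // addrK mulrC; apply: ler_wpM2r => //.
    by rewrite ler_nat; exact: ltn_ord.
  rewrite route_inr => /eqP ->.
  by rewrite /mu0 /= mulVKf ?lt0r_neq0 // addrK mulrC.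
Qed.

Lemma mu0_le1 (R : realType) (K w : nat) (Ra Rb lmin t : R) :
  0 < Ra -> 0 < Rb -> 0 <= t -> 0 <= lmin -> (0 < w)%N ->
  Rb^-1 * ((K%:R + 1) * t + lmin * (w%:R * K%:R)) + w%:R * (Ra^-1 * (t + lmin)) <= 1 ->
  w%:R * (Ra^-1 * ((K%:R + 1) * t + lmin)) <= 1 ->
  forall v : lineV K w, v != line_root K w -> mu0 Ra Rb lmin t v <= 1.
Proof.
move=> Ra0 Rb0 t0 l0 w0 E0 EK.
have q0 : 0 <= Rb^-1 by rewrite invr_ge0 ltW.
have p0 : 0 <= Ra^-1 by rewrite invr_ge0 ltW.
have W1 : 1 <= w%:R :> R by rewrite ler1n.
case=> [i|[k j]] hv.
  rewrite root_neq in hv; rewrite mu0_inl //.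
  have i1 : 1 <= (i : nat)%:R :> R by rewrite ler1n.
  have : 0 <= Rb^-1 * lmin * w%:R * ((i : nat)%:R - 1) by rewrite !mulr_ge0 // ?subr_ge0 //; lra.
  have : 0 <= w%:R * (Ra^-1 * (t + lmin)) by rewrite !mulr_ge0 //; lra.
  lra.
rewrite /mu0 /= cnt_inr -natr1 mulr1.
have kK : (k : nat)%:R <= K%:R :> R by rewrite ler_nat -ltnS ltn_ord.
have : 0 <= Ra^-1 * t * (K%:R - (k : nat)%:R) by rewrite !mulr_ge0 // subr_ge0.
have : 0 <= (w%:R - 1) * (Ra^-1 * ((K%:R + 1) * t + lmin)).
  by apply: mulr_ge0; [lra | apply: mulr_ge0 => //; apply: addr_ge0 => //; apply: mulr_ge0 => //; apply: addr_ge0].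
lra.
Qed.

Lemma Wp_le (R : realType) (K w : nat) (Ra Rb : R) : 0 < Ra -> 0 < Rb ->
  w%:R * Rb <= (K.+1)%:R * Ra -> w%:R * Ra^-1 <= (K%:R + 1) * Rb^-1.
Proof.
move=> Ra0 Rb0 h.
have q0 : 0 <= Rb^-1 by rewrite invr_ge0 ltW.
have p0 : 0 <= Ra^-1 by rewrite invr_ge0 ltW.
have h2 := ler_wpM2r (mulr_ge0 p0 q0) h.
have e1 : w%:R * Rb * (Ra^-1 * Rb^-1) = w%:R * Ra^-1 by field; rewrite ?lt0r_neq0.
have e2 : (K.+1)%:R * Ra * (Ra^-1 * Rb^-1) = (K%:R + 1) * Rb^-1.
  by rewrite -natr1; field; rewrite ?lt0r_neq0.
by rewrite -e1 -e2.
Qed.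

Lemma HD_feas (R : realType) (K w : nat) (Ra Rb lmin t : R) :
  (2 <= K)%N -> (0 < w)%N -> 0 < Ra -> 0 < Rb -> w%:R * Rb <= (K.+1)%:R * Ra ->
  0 <= t -> 0 <= lmin ->
  (2 * (K%:R + 1) * Rb^-1 + 2 * w%:R * Ra^-1) * t <=
    1 - w%:R * lmin * ((2 * K%:R - 1) * Rb^-1 + Ra^-1) ->
  (2 * (K%:R + 1) * Rb^-1 + K%:R * w%:R * Ra^-1) * t <=
    1 - w%:R * lmin * (3 * Rb^-1 + Ra^-1) ->
  feasibleP (line_root K w) (@line_par K w) (@line_isBS K w) (@line_isUE K w)
     (line_cap Ra Rb) (@line_GHD K w) lmin t (fun _ => lmin) (mu0 Ra Rb lmin t).
Proof.
move=> K2 w0 Ra0 Rb0 hw t0 l0 h1 hL.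
have q0 : 0 <= Rb^-1 by rewrite invr_ge0 ltW.
have p0 : 0 <= Ra^-1 by rewrite invr_ge0 ltW.
have W0 : 0 <= w%:R :> R by [].
have hWp := @Wp_le R K w Ra Rb Ra0 Rb0 hw.
have K1 : 1 <= K%:R :> R by rewrite ler1n; apply: ltnW.
have E0 := psi_0 t0 W0 l0 p0 q0 K1 h1.
have EK' := psi_K t0 W0 l0 p0 q0 hWp hL.
apply: feas_of => //.
- move=> k; rewrite bsHD mu0_inr_sum.
  case: (posnP k) => [k0|kp].
    rewrite k0 ifT; last exact: ltnW.
    rewrite mu0_inl; last by rewrite inordE // ltnW.
    rewrite inordE; last exact: ltnW.
    rewrite mulr1n; move: E0; clear; lra.
  case: (ltnP k K) => kK.
    rewrite mu0_inl; last by rewrite inordE //.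
    rewrite mu0_inl // inordE // -natr1.
    have c1 : 1 <= (k : nat)%:R :> R by rewrite ler1n.
    have ck : (k : nat)%:R <= K%:R - 1 :> R by rewrite lerBrDr natr1 ler_nat.
    have := psi_mid t0 W0 l0 p0 q0 c1 ck h1 hL; clear; lra.
  have ekK : (k : nat) = K by apply/eqP; rewrite eqn_leq kK -ltnS ltn_ord.
  rewrite mu0_inl // ekK.
  move: EK'; clear; lra.
- apply: mu0_le1 => //.
  have : 0 <= Rb^-1 * ((K%:R + 1) * t + lmin * w%:R).
    apply: mulr_ge0 => //; apply: addr_ge0; apply: mulr_ge0 => //; lra.
  move: EK'; clear; lra.
Qed.

Lemma FD_feas (R : realType) (K w : nat) (Ra Rb lmin t : R) :
  (2 <= K)%N -> (0 < w)%N -> 0 < Ra -> 0 < Rb -> w%:R * Rb <= (K.+1)%:R * Ra ->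
  0 <= t -> 0 <= lmin ->
  ((K%:R + 1) * Rb^-1 + w%:R * Ra^-1) * t <=
    1 - w%:R * lmin * (K%:R * Rb^-1 + Ra^-1) ->
  ((K%:R + 1) * Rb^-1 + K%:R * w%:R * Ra^-1) * t <=
    1 - w%:R * lmin * (Rb^-1 + Ra^-1) ->
  feasibleP (line_root K w) (@line_par K w) (@line_isBS K w) (@line_isUE K w)
     (line_cap Ra Rb) (@line_GFD K w) lmin t (fun _ => lmin) (mu0 Ra Rb lmin t).
Proof.
move=> K2 w0 Ra0 Rb0 hw t0 l0 h1 hL.
have q0 : 0 <= Rb^-1 by rewrite invr_ge0 ltW.
have p0 : 0 <= Ra^-1 by rewrite invr_ge0 ltW.
have W0 : 0 <= w%:R :> R by [].
have hWp := @Wp_le R K w Ra Rb Ra0 Rb0 hw.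
have c0 : 0 <= 0 :> R by [].
have cK : 0 <= K%:R - 1 :> R by rewrite subr_ge0 ler1n ltnW.
have E0 := phi_mid t0 W0 l0 p0 q0 c0 cK h1 hL.
have EK := phi_K t0 W0 l0 p0 q0 hWp hL.
apply: feas_of => //.
- move=> k; rewrite bsFD mu0_inr_sum.
  case: (ltnP k K) => kK.
    rewrite mu0_inl; last by rewrite inordE //.
    rewrite inordE // -natr1.
    have c1 : 0 <= (k : nat)%:R :> R by [].
    have ck : (k : nat)%:R <= K%:R - 1 :> R by rewrite lerBrDr natr1 ler_nat.
    have := phi_mid t0 W0 l0 p0 q0 c1 ck h1 hL; clear; lra.
  have ekK : (k : nat) = K by apply/eqP; rewrite eqn_leq kK -ltnS ltn_ord.
  rewrite ekK add0r; move: EK; clear; lra.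
- apply: mu0_le1 => //.
    move: E0; clear; lra.
Qed.

Lemma CH_id (R : realType) (K : nat) (W l a b : R) : a != 0 -> b != 0 ->
  (1 - W * l * ((2 * K%:R - 1) * b^-1 + a^-1)) * (2 * (K%:R + 1) * b^-1 + K%:R * W * a^-1)
  - (1 - W * l * (3 * b^-1 + a^-1)) * (2 * (K%:R + 1) * b^-1 + 2 * W * a^-1)
  = (K%:R - 2) * W * a^-1 ^+ 2 *
    (a - l * (4 * (K.+1)%:R * (a / b) ^+ 2 + (2 * K%:R + 3) * W * (a / b) + W)).
Proof. move=> a0 b0; rewrite -natr1; field; by rewrite ?a0 ?b0. Qed.

Lemma CF_id (R : realType) (K : nat) (W l a b : R) : a != 0 -> b != 0 ->
  (1 - W * l * (K%:R * b^-1 + a^-1)) * ((K%:R + 1) * b^-1 + K%:R * W * a^-1)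
  - (1 - W * l * (b^-1 + a^-1)) * ((K%:R + 1) * b^-1 + W * a^-1)
  = (K%:R - 1) * W * a^-1 ^+ 2 *
    (a - l * ((K.+1)%:R * (a / b) ^+ 2 + (K.+1)%:R * W * (a / b) + W)).
Proof. move=> a0 b0; rewrite -natr1; field; by rewrite ?a0 ?b0. Qed.

Lemma cross (R : realType) (D1 D2 N1 N2 : R) : 0 < D2 -> N2 * D1 <= N1 * D2 -> D1 * (N2 / D2) <= N1.
Proof. by move=> d2 h; rewrite mulrA [D1 * N2]mulrC ler_pdivrMr. Qed.

Arguments HD_ub1 {R K w Ra Rb lmin t lam mu}.
Arguments HD_ubL {R K w Ra Rb lmin t lam mu}.
Arguments FD_ub0 {R K w Ra Rb lmin t lam mu}.
Arguments FD_ubL {R K w Ra Rb lmin t lam mu}.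
Arguments HD_feas {R K w Ra Rb lmin t}.
Arguments FD_feas {R K w Ra Rb lmin t}.

Lemma frac_div (R : realType) (A B C D : R) : B != 0 -> C != 0 -> D != 0 ->
  (A / B) / (C / D) = A / C * (D / B).
Proof. by move=> b c d; field; rewrite b c d. Qed.

Lemma frac_div2 (R : realType) (A B C : R) : B != 0 -> C != 0 ->
  (A / B) / (C / (2 * B)) = 2 * (A / C).
Proof. by move=> b c; field; rewrite b c /= ?pnatr_eq0. Qed.

Theorem corollary1 (R : realType) (K w : nat) (Ra Rb lmin eta tHD tFD : R) :
  (2 <= K)%N -> (1 <= w)%N ->
  0 < Ra -> Ra < Rb -> w%:R * Rb <= (K.+1)%:R * Ra ->
  0 < lmin ->
  line_opt Ra Rb lmin (@line_GHD K w) tHD ->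
  line_opt Ra Rb lmin (@line_GFD K w) tFD ->
  0 < tHD ->
  0 < eta < 1 ->
  let dHD := - ln (1 - eta) / tHD in
  let dFD := - ln (1 - eta) / tFD in
  let l := dHD / dFD in
  let r := Ra / Rb in
  let Lam1 := Ra / (4 * (K.+1)%:R * r ^+ 2 + (2 * K%:R + 3) * w%:R * r + w%:R) in
  let Lam2 := Ra / ((K.+1)%:R * r ^+ 2 + (K.+1)%:R * w%:R * r + w%:R) in
  [/\ lmin <= Lam1 ->
        l = (1 - w%:R * lmin * (1 / Rb + 1 / Ra))
            / (1 - w%:R * lmin * (3 / Rb + 1 / Ra))
            * ((2 * (K.+1)%:R / Rb + K%:R * w%:R / Ra)
               / ((K.+1)%:R / Rb + K%:R * w%:R / Ra)),
      Lam1 < lmin <= Lam2 ->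
        l = (1 - w%:R * lmin * (1 / Rb + 1 / Ra))
            / (1 - w%:R * lmin * ((2 * K%:R - 1) / Rb + 1 / Ra))
            * ((2 * (K.+1)%:R / Rb + 2 * w%:R / Ra)
               / ((K.+1)%:R / Rb + K%:R * w%:R / Ra)) &
      Lam2 < lmin ->
        l = 2 * ((1 - w%:R * lmin * (K%:R / Rb + 1 / Ra))
                 / (1 - w%:R * lmin * ((2 * K%:R - 1) / Rb + 1 / Ra)))].
Proof.
move=> K2 w1 Ra0 RaRb hw l0 HHD HFD tHD0 /andP[et0 et1] dHD dFD l r Lam1 Lam2.
have Rb0 : 0 < Rb := lt_trans Ra0 RaRb.
have q0 : 0 < Rb^-1 by rewrite invr_gt0.
have p0 : 0 < Ra^-1 by rewrite invr_gt0.
have W1 : 1 <= w%:R :> R by rewrite ler1n.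
have K2r : 2 <= K%:R :> R by rewrite (ler_nat R 2 K).
have lle : 0 <= lmin := ltW l0.
case: HHD => [[lamH [muH HfH]] HmaxH].
case: HFD => [[lamF [muF HfF]] HmaxF].
have hu1 := HD_ub1 HfH K2 w1 Ra0 Rb0.
have huL := HD_ubL HfH K2 w1 Ra0 Rb0.
have gu0 := FD_ub0 HfF K2 w1 Ra0 Rb0.
have guL := FD_ubL HfF K2 w1 Ra0 Rb0.
have tFD0 : 0 <= tFD by case: HfF.
have clH := fun x x0 h1 h2 => HmaxH x _ _ (HD_feas K2 w1 Ra0 Rb0 hw x0 lle h1 h2).
have clF := fun x x0 h1 h2 => HmaxF x _ _ (FD_feas K2 w1 Ra0 Rb0 hw x0 lle h1 h2).
set Nh1 := 1 - w%:R * lmin * ((2 * K%:R - 1) * Rb^-1 + Ra^-1) in hu1 clH *.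
set Dh1 := 2 * (K%:R + 1) * Rb^-1 + 2 * w%:R * Ra^-1 in hu1 clH *.
set NhL := 1 - w%:R * lmin * (3 * Rb^-1 + Ra^-1) in huL clH *.
set DhL := 2 * (K%:R + 1) * Rb^-1 + K%:R * w%:R * Ra^-1 in huL clH *.
set Ng0 := 1 - w%:R * lmin * (K%:R * Rb^-1 + Ra^-1) in gu0 clF *.
set Dg0 := (K%:R + 1) * Rb^-1 + w%:R * Ra^-1 in gu0 clF *.
set NgL := 1 - w%:R * lmin * (Rb^-1 + Ra^-1) in guL clF *.
set DgL := (K%:R + 1) * Rb^-1 + K%:R * w%:R * Ra^-1 in guL clF *.
have a1 : 0 < K%:R * Rb^-1 by rewrite mulr_gt0 // (lt_le_trans _ K2r).
have a2 : 0 < w%:R * Ra^-1 by rewrite mulr_gt0 // (lt_le_trans ltr01 W1).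
have a3 : 0 < K%:R * w%:R * Ra^-1 by rewrite -mulrA mulr_gt0 // (lt_le_trans _ K2r).
have Dh1p : 0 < Dh1 by rewrite /Dh1; move: a1 a2 a3 q0 p0; clear; lra.
have DhLp : 0 < DhL by rewrite /DhL; move: a1 a2 a3 q0 p0; clear; lra.
have Dg0p : 0 < Dg0 by rewrite /Dg0; move: a1 a2 a3 q0 p0; clear; lra.
have DgLp : 0 < DgL by rewrite /DgL; move: a1 a2 a3 q0 p0; clear; lra.
have tHFD : tHD <= tFD.
  apply: clF; first exact: ltW.
    have h1 : 0 <= Dg0 * tHD by rewrite mulr_ge0 // ltW.
    have km1 : 0 <= K%:R - 1 :> R by move: K2r; clear; lra.
    have h2 : 0 <= w%:R * lmin * (K%:R - 1) * Rb^-1 by rewrite !mulr_ge0 // ltW.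
    move: hu1 h1 h2; rewrite /Dg0 /Ng0 /Dh1 /Nh1; clear; lra.
  have h1 : 0 <= (K%:R + 1) * Rb^-1 * tHD.
    by rewrite !mulr_ge0 ?ltW //; move: K2r; clear; lra.
  have h2 : 0 <= w%:R * lmin * Rb^-1 by rewrite !mulr_ge0 // ltW.
  move: huL h1 h2; rewrite /DgL /NgL /DhL /NhL; clear; lra.
have tFDp : 0 < tFD := lt_le_trans tHD0 tHFD.
have HDeq : forall x, (x = Nh1 / Dh1 \/ x = NhL / DhL) -> Dh1 * x <= Nh1 -> DhL * x <= NhL -> tHD = x.
  move=> x hx h1 h2.
  have tx : tHD <= x by case: hx => ->; rewrite ler_pdivlMr // mulrC.
  apply/le_anti/andP; split => //; apply: clH => //; exact: le_trans (ltW tHD0) tx.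
have FDeq : forall x, (x = Ng0 / Dg0 \/ x = NgL / DgL) -> Dg0 * x <= Ng0 -> DgL * x <= NgL -> tFD = x.
  move=> x hx h1 h2.
  have tx : tFD <= x by case: hx => ->; rewrite ler_pdivlMr // mulrC.
  apply/le_anti/andP; split => //; apply: clF => //; exact: le_trans tFD0 tx.
have rp : 0 < r by rewrite /r divr_gt0.
set den1 := 4 * (K.+1)%:R * r ^+ 2 + (2 * K%:R + 3) * w%:R * r + w%:R.
set den2 := (K.+1)%:R * r ^+ 2 + (K.+1)%:R * w%:R * r + w%:R.
have b1 : 0 <= (K.+1)%:R * r ^+ 2 by rewrite mulr_ge0 // sqr_ge0.
have b2 : 0 <= K%:R * w%:R * r by rewrite !mulr_ge0 // ltW.
have b3 : 0 <= w%:R * r by rewrite !mulr_ge0 // ltW.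
have den2p : 0 < den2 by rewrite /den2; move: b1 b2 b3 W1; clear; lra.
have den1p : 0 < den1 by rewrite /den1; move: b1 b2 b3 W1; clear; lra.
have den12 : lmin * den2 <= lmin * den1.
  by apply: ler_wpM2l => //; rewrite /den1 /den2; move: b1 b2 b3 W1; clear; lra.
have CH : Nh1 * DhL - NhL * Dh1 = (K%:R - 2) * w%:R * Ra^-1 ^+ 2 * (Ra - lmin * den1).
  rewrite /Nh1 /DhL /NhL /Dh1 /den1 /r CH_id //; exact: lt0r_neq0.
have CF : Ng0 * DgL - NgL * Dg0 = (K%:R - 1) * w%:R * Ra^-1 ^+ 2 * (Ra - lmin * den2).
  rewrite /Ng0 /DgL /NgL /Dg0 /den2 /r CF_id //; exact: lt0r_neq0.
have cH : 0 <= (K%:R - 2) * w%:R * Ra^-1 ^+ 2.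
  by apply: mulr_ge0; [apply: mulr_ge0; [move: K2r; clear; lra | by []] | exact: sqr_ge0].
have cF : 0 <= (K%:R - 1) * w%:R * Ra^-1 ^+ 2.
  by apply: mulr_ge0; [apply: mulr_ge0; [move: K2r; clear; lra | by []] | exact: sqr_ge0].
have L0 : ln (1 - eta) != 0.
  have : ln (1 - eta) < 0 by apply: ln_lt0; apply/andP; split; move: et0 et1; clear; lra.
  by move=> h; rewrite lt_eqF.
have lE : l = tFD / tHD.
  rewrite /l /dHD /dFD; field; rewrite ?L0 ?(lt0r_neq0 tHD0) ?(lt0r_neq0 tFDp) //.
have NhLp : 0 < NhL := lt_le_trans (mulr_gt0 DhLp tHD0) huL.
have Nh1p : 0 < Nh1 := lt_le_trans (mulr_gt0 Dh1p tHD0) hu1.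
have selfH1 : Dh1 * (Nh1 / Dh1) <= Nh1 by rewrite mulrC divfK ?lt0r_neq0.
have selfHL : DhL * (NhL / DhL) <= NhL by rewrite mulrC divfK ?lt0r_neq0.
have selfG0 : Dg0 * (Ng0 / Dg0) <= Ng0 by rewrite mulrC divfK ?lt0r_neq0.
have selfGL : DgL * (NgL / DgL) <= NgL by rewrite mulrC divfK ?lt0r_neq0.
have L1le : lmin <= Lam1 -> 0 <= Ra - lmin * den1.
  by move=> h; rewrite subr_ge0 -(@ler_pdivlMr _ den1) //.
have L1lt : Lam1 < lmin -> Ra - lmin * den1 < 0.
  by move=> h; rewrite subr_lt0 -(@ltr_pdivrMr _ den1) //.
have L2le : lmin <= Lam2 -> 0 <= Ra - lmin * den2.
  by move=> h; rewrite subr_ge0 -(@ler_pdivlMr _ den2) //.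
have L2lt : Lam2 < lmin -> Ra - lmin * den2 < 0.
  by move=> h; rewrite subr_lt0 -(@ltr_pdivrMr _ den2) //.
have FDL : 0 <= Ra - lmin * den2 -> tFD = NgL / DgL.
  move=> e2; apply: FDeq; [by right | | by []].
  by apply: cross => //; rewrite -subr_ge0 CF; exact: mulr_ge0.
have HD1 : Ra - lmin * den1 < 0 -> tHD = Nh1 / Dh1.
  move=> e1; apply: HDeq; [by left | by [] | ].
  by apply: cross => //; rewrite -subr_le0 CH; apply: mulr_ge0_le0 => //; exact: ltW.
rewrite lE -[(K.+1)%:R]natr1 !mul1r.
split.
- move=> h; have e1 := L1le h.
  have hHD : tHD = NhL / DhL.
    apply: HDeq; [by right | | by []].
    by apply: cross => //; rewrite -subr_ge0 CH; exact: mulr_ge0.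
  have e2 : 0 <= Ra - lmin * den2 by move: e1 den12; clear; lra.
  by rewrite hHD (FDL e2) frac_div ?lt0r_neq0.
- case/andP => h1 h2.
  by rewrite (HD1 (L1lt h1)) (FDL (L2le h2)) frac_div ?lt0r_neq0.
- move=> h; have e2 := L2lt h.
  have e1 : Ra - lmin * den1 < 0 by move: e2 den12; clear; lra.
  have hFD : tFD = Ng0 / Dg0.
    apply: FDeq; [by left | by [] | ].
    by apply: cross => //; rewrite -subr_le0 CF; apply: mulr_ge0_le0 => //; exact: ltW.
  have eD : Dh1 = 2 * Dg0 by rewrite /Dh1 /Dg0; ring.
  by rewrite (HD1 e1) hFD eD frac_div2 ?lt0r_neq0.
Qed.
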